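(* Let $n\ge 2$. For $0\le k\le n-2$, $$a(n,k)={\left[ n \atop n-k\right]}_2 .$$
   Context: $A_n$ is the alternating group on $\{1,\dots,n\}$, $T(A_n)=\{(1\,2)(i\,j)\mid 1\le i<j\le n\}$, $\ell_{T(A_n)}(v)=\min\{r\ge 0\mid v=t_1\cdots t_r,\ t_i\in T(A_n)\}$, and $a(n,k)$ is the number of $v\in A_n$ with $\ell_{T(A_n)}(v)=k$. The 2-restricted unsigned Stirling number of the first kind ${\left[ n \atop j\right]}_2$ is the number of permutations of $\{1,\dots,n\}$ with exactly $j$ cycles (fixed points counted) in which $1$ and $2$ lie in distinct cycles. *)

(* Defs.v *)
From mathcomp Require Import all_boot all_order all_fingroup all_solvable.
Set Implicit Arguments. Unset Strict Implicit. Unset Printing Implicit Defensive.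

(* Points 1,2 of {1,...,n} are the ordinals with values 0,1 of 'I_n. *)

(* T(A_n) = {(1 2)(i j) | 1 <= i < j <= n}.  In MathComp, (s * t)%g applies s
   first, so the function (1 2)∘(i j) is (tperm i j * tperm x y)%g. *)
Definition TA (n : nat) : {set 'S_n} :=
  [set s : 'S_n | [exists x : 'I_n, exists y : 'I_n, exists i : 'I_n,
     exists j : 'I_n,
     [&& val x == 0%N, val y == 1%N, (i < j)%N & s == (tperm i j * tperm x y)%g]]].

Definition prodT (n r : nat) (v : 'S_n) : bool :=
  [exists t : r.-tuple 'S_n,
     all (fun s => s \in TA n) t && (v == (\prod_(s <- t) s)%g)].

Definition lenT_eq (n : nat) (v : 'S_n) (k : nat) : bool :=
  prodT k v && [forall r : 'I_k, ~~ prodT r v].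

Definition a_nk (n k : nat) : nat :=
  #|[set v in ('Alt_('I_n))%g | lenT_eq v k]|.

Definition stirling1_2 (n j : nat) : nat :=
  #|[set s : 'S_n | (#|porbits s| == j) &&
      [exists x : 'I_n, exists y : 'I_n,
         [&& val x == 0%N, val y == 1%N & porbit s x != porbit s y]]]|.

(* Main.v *)
Require Import Defs.
From mathcomp Require Import all_boot all_order all_fingroup all_solvable.
From mathcomp Require Import zify.
Set Implicit Arguments. Unset Strict Implicit. Unset Printing Implicit Defensive.

Definition cyc n (s : 'S_n) := #|porbits s|.
Definition dd n (s : 'S_n) := n - cyc s.
Definition hh n (t s : 'S_n) := minn (dd s) (dd (t * s)%g).

Lemma cyc_le n (s : 'S_n) : cyc s <= n.
Proof. by rewrite /cyc /porbits (leq_trans (leq_imset_card _ _)) // card_ord. Qed.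

Lemma cyc_tperm n (s : 'S_n) p q : cyc s <= (cyc (tperm p q * s)%g).+1.
Proof.
have := porbits_mul_tperm s p q; rewrite /cyc /=.
case: (p =P q) => [->|ne]; first by rewrite porbit_id /=; lia.
case: (p \in porbit s q) => /=; lia.
Qed.

Lemma dd_tperm n (s : 'S_n) p q : dd (tperm p q * s)%g <= (dd s).+1.
Proof. have := cyc_tperm s p q; have := cyc_le s; have := cyc_le (tperm p q * s)%g; rewrite /dd; lia. Qed.

Lemma cyc1 n : cyc (1 : 'S_n) = n.
Proof.
rewrite /cyc /porbits card_imset ?card_ord // => a b /eqP.
rewrite eq_porbit_mem => /porbitP [i]; by rewrite expg1n perm1.
Qed.

Lemma dd1 n : dd (1 : 'S_n) = 0.
Proof. by rewrite /dd cyc1 subnn. Qed.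

Lemma split_ne1 n (s : 'S_n) : s != 1%g ->
  exists p q : 'I_n, p != q /\ dd (tperm p q * s)%g < dd s.
Proof.
move=> ns1.
have [p hp] : exists p, s p != p.
  apply/existsP; apply: contraR ns1 => /existsPn H; apply/eqP/permP => z.
  by rewrite perm1; apply/eqP; have := H z; rewrite negbK.
exists p, (s p); split; first by rewrite eq_sym.
have E : cyc (tperm p (s p) * s)%g = (cyc s).+1.
  have := porbits_mul_tperm s p (s p).
  have -> : p \in porbit s (s p) by rewrite porbit_sym (mem_porbit s 1).
  by rewrite /cyc eq_sym hp /= double0 addn0 addn1.
have := cyc_le (tperm p (s p) * s)%g; rewrite /dd E; lia.
Qed.

Lemma min_aux a b c d : a <= d.+1 -> b <= c.+1 -> minn a b <= (minn c d).+1.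
Proof. lia. Qed.

Lemma min_aux2 a b c d : b < c -> c <= d -> minn a b < minn c d.
Proof. lia. Qed.
Lemma min_aux3 a b c d : a < d -> d < c -> minn a b < minn c d.
Proof. lia. Qed.

Lemma hh_step n (x y : 'I_n) (g v : 'S_n) : val x = 0 -> val y = 1 ->
  g \in TA n -> hh (tperm x y) (g * v)%g <= (hh (tperm x y) v).+1.
Proof.
move=> hx hy; rewrite inE => /existsP[x' /existsP[y' /existsP[i /existsP[j]]]].
case/and4P=> /eqP hx' /eqP hy' _ /eqP ->.
have -> : x' = x by apply: val_inj; rewrite hx' hx.
have -> : y' = y by apply: val_inj; rewrite hy' hy.
set t := tperm x y.
have H1 : dd (tperm i j * t * v)%g <= (dd (t*v)%g).+1 by rewrite -mulgA dd_tperm.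
have H2 : dd (t * (tperm i j * t * v))%g <= (dd v).+1.
  have -> : (t * (tperm i j * t * v) = tperm (t i) (t j) * v)%g.
    by rewrite -tpermJ conjgE tpermV !mulgA.
  exact: dd_tperm.
exact: min_aux H1 H2.
Qed.

Lemma lower n (x y : 'I_n) (l : seq 'S_n) : val x = 0 -> val y = 1 ->
  all (fun s => s \in TA n) l -> hh (tperm x y) (\prod_(s <- l) s)%g <= size l.
Proof.
move=> hx hy; elim: l => [|g l IH] /=.
  by rewrite big_nil /hh dd1 min0n.
case/andP=> hg hl; rewrite big_cons.
by apply: leq_trans (hh_step _ hx hy hg) _; rewrite ltnS IH.
Qed.

Lemma TA_mem n (x y i j : 'I_n) : val x = 0 -> val y = 1 -> i != j ->
  (tperm i j * tperm x y)%g \in TA n.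
Proof.
move=> hx hy hij; rewrite inE; case: (ltngtP i j) => [lt|gt|eq].
- apply/existsP; exists x; apply/existsP; exists y; apply/existsP; exists i.
  apply/existsP; exists j; by rewrite hx hy lt !eqxx.
- apply/existsP; exists x; apply/existsP; exists y; apply/existsP; exists j.
  apply/existsP; exists i; by rewrite hx hy gt tpermC !eqxx.
- by move: hij; rewrite (val_inj eq) eqxx.
Qed.

Lemma prodT_cons n r (g v : 'S_n) : g \in TA n -> prodT r v -> prodT r.+1 (g * v)%g.
Proof.
move=> hg /existsP[t /andP[ht /eqP ->]]; apply/existsP; exists (cons_tuple g t).
by rewrite /= hg ht big_cons eqxx.
Qed.

Lemma prodT0 n : prodT 0 (1 : 'S_n).
Proof. by apply/existsP; exists [tuple]; rewrite /= big_nil eqxx. Qed.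

Lemma key_step n (x y : 'I_n) (v : 'S_n) : x != y -> ~~ odd_perm v -> v != 1%g ->
  exists p q : 'I_n, p != q /\
   minn (dd (tperm x y * (tperm p q * v)))%g (dd (tperm p q * v)%g) < hh (tperm x y) v.
Proof.
move=> hxy ev nv1; set t := tperm x y.
case: (leqP (dd v) (dd (t*v)%g)) => h.
  have [p [q [hpq hd]]] := split_ne1 nv1.
  exists p, q; split => //; exact: min_aux2 hd h.
have nt1 : (t * v)%g != 1%g.
  apply: contra ev => /eqP e; have -> : v = t by rewrite -(tpermKg x y v) -/t e mulg1.
  by rewrite odd_tperm.
have [p [q [hpq hd]]] := split_ne1 nt1.
exists (t p), (t q); split; first by rewrite (inj_eq perm_inj).
have -> : (t * (tperm (t p) (t q) * v) = tperm p q * (t * v))%g.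
  by rewrite -tpermJ conjgE tpermV !mulgA tperm2 mul1g.
exact: min_aux3 hd h.
Qed.

Lemma upper n (x y : 'I_n) m : val x = 0 -> val y = 1 -> forall v : 'S_n,
  ~~ odd_perm v -> hh (tperm x y) v <= m -> prodT m v.
Proof.
move=> hx hy; have hxy : x != y by apply/eqP => e; move: hy; rewrite -e hx.
elim: m => [|m IH] v ev hv.
  case: (v =P 1%g) => [->|/eqP nv1]; first exact: prodT0.
  have [p [q [_ hd]]] := key_step hxy ev nv1; by have := leq_trans hd hv.
case: (v =P 1%g) => [->|/eqP nv1].
  have P : prodT m (1 : 'S_n) by apply: IH; rewrite ?odd_perm1 // /hh dd1 min0n.
  by have := prodT_cons (TA_mem hx hy hxy) P; rewrite tperm2 mul1g.
have [p [q [hpq hd]]] := key_step hxy ev nv1.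
have ev' : ~~ odd_perm (tperm x y * (tperm p q * v))%g.
  by rewrite !odd_permM !odd_tperm hxy hpq (negbTE ev).
have P : prodT m (tperm x y * (tperm p q * v))%g.
  by apply: IH => //; rewrite /hh tpermKg -ltnS (leq_trans hd hv).
have := prodT_cons (TA_mem hx hy hpq) P.
by rewrite -mulgA tpermKg tpermKg.
Qed.

Lemma prodT_hh n (x y : 'I_n) r (v : 'S_n) : val x = 0 -> val y = 1 ->
  ~~ odd_perm v -> prodT r v = (hh (tperm x y) v <= r).
Proof.
move=> hx hy ev; apply/idP/idP => [|h]; last exact: (upper hx hy ev h).
case/existsP=> t /andP[ha /eqP ->]; have := lower hx hy ha; by rewrite size_tuple.
Qed.

Lemma cyc_mul_tperm n (x y : 'I_n) (s : 'S_n) :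
  cyc (tperm x y * s)%g + (x \notin porbit s y).*2 = cyc s + (x != y).
Proof. exact: porbits_mul_tperm. Qed.

Lemma same_tperm n (x y : 'I_n) (s : 'S_n) : x != y ->
  (porbit (tperm x y * s)%g x == porbit (tperm x y * s)%g y) = ~~ (porbit s x == porbit s y).
Proof.
move=> hxy; have A := cyc_mul_tperm x y s.
have B := cyc_mul_tperm x y (tperm x y * s)%g; rewrite tpermKg in B.
rewrite !eq_porbit_mem; move: A B; rewrite hxy /=.
case: (x \in porbit s y); case: (x \in porbit (tperm x y * s)%g y) => //=; lia.
Qed.

Definition phi n (t s : 'S_n) (x y : 'I_n) :=
  if porbit s x == porbit s y then (t * s)%g else s.

Lemma hh_phi n (x y : 'I_n) (v : 'S_n) : x != y ->
  hh (tperm x y) v = dd (phi (tperm x y) v x y).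
Proof.
move=> hxy; have A := cyc_mul_tperm x y v.
have C1 := cyc_le v; have C2 := cyc_le (tperm x y * v)%g.
move: A C1 C2; rewrite /phi /hh /dd eq_porbit_mem hxy /=.
case: (x \in porbit v y) => /=; move: (cyc v) (cyc (tperm x y * v)%g) => a b; lia.
Qed.


Lemma lenT_hh n (x y : 'I_n) k (v : 'S_n) : val x = 0 -> val y = 1 ->
  ~~ odd_perm v -> lenT_eq v k = (hh (tperm x y) v == k).
Proof.
move=> hx hy ev; rewrite /lenT_eq (prodT_hh _ hx hy ev).
apply/andP/eqP => [[hk /forallP F]|e].
  apply/eqP; rewrite eqn_leq hk leqNgt; apply/negP => lt.
  by have := F (Ordinal lt); rewrite (prodT_hh _ hx hy ev) leqnn.
split; first by rewrite e.
by apply/forallP => r; rewrite (prodT_hh _ hx hy ev) e -ltnNge ltn_ord.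
Qed.

Unset Implicit Arguments.
Theorem theorem9p2 (n k : nat) :
  (2 <= n)%N -> (k <= n - 2)%N -> a_nk n k = stirling1_2 n (n - k).
Proof.
move=> hn hk; have hkn : k <= n by lia.
have h0 : 0 < n by lia.
pose x0 : 'I_n := Ordinal h0; pose y0 : 'I_n := Ordinal hn.
have hx : val x0 = 0 by []. have hy : val y0 = 1 by [].
have hxy : x0 != y0 by [].
set t := tperm x0 y0.
pose f := fun v => phi t v x0 y0.
have EA : [set v in ('Alt_('I_n))%g | lenT_eq v k] =
          [set v : 'S_n | ~~ odd_perm v && (hh t v == k)].
  apply/setP => v; rewrite [in LHS]inE Alt_even inE.
  by case ev: (odd_perm v) => //=; rewrite (lenT_hh _ hx hy) ?ev.
have EB : [set s : 'S_n | (#|porbits s| == n - k) &&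
      [exists x : 'I_n, exists y : 'I_n,
         [&& val x == 0%N, val y == 1%N & porbit s x != porbit s y]]] =
    f @: [set v : 'S_n | ~~ odd_perm v && (hh t v == k)].
  apply/setP => s; rewrite inE; apply/andP/imsetP.
  - move=> [/eqP hc /existsP[x /existsP[y /and3P[/eqP ex /eqP ey hs]]]].
    have ex0 : x = x0 by apply: val_inj.
    have ey0 : y = y0 by apply: val_inj.
    rewrite ex0 ey0 in hs.
    case od: (odd_perm s).
    + exists (t * s)%g.
        rewrite inE odd_permM odd_tperm hxy od /= (hh_phi _ hxy) /phi.
        rewrite same_tperm // hs /= tpermKg /dd /cyc hc; apply/eqP; lia.
      by rewrite /f /phi same_tperm // hs /= tpermKg.
    + exists s; last by rewrite /f /phi (negbTE hs).
      rewrite inE od /= (hh_phi _ hxy) /phi (negbTE hs) /dd /cyc hc; apply/eqP; lia.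
  - move=> [v]; rewrite inE => /andP[ev /eqP hv] ->; split.
      have := cyc_le (f v); rewrite /f -/(cyc _); move: hv.
      rewrite (hh_phi _ hxy) /dd => hv hc; apply/eqP.
      move: hv hc; move: (cyc _) => c; lia.
    apply/existsP; exists x0; apply/existsP; exists y0; rewrite hx hy /=.
    rewrite /f /phi; case: ifP => hs; last by rewrite hs.
    by rewrite same_tperm // hs.
rewrite /a_nk /stirling1_2 EA EB card_in_imset //.
move=> v1 v2; rewrite !inE => /andP[e1 _] /andP[e2 _]; rewrite /f /phi.
case: ifP => _; case: ifP => _.
- exact: mulgI.
- move=> e; move: e2; rewrite -e odd_permM odd_tperm hxy (negbTE e1) //.
- move=> e; move: e1; rewrite e odd_permM odd_tperm hxy (negbTE e2) //.
- by [].
Qed.
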